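(* (a) The Lie superalgebra $\mathfrak g=W(m,n)$ is generated by $\mathfrak g_{-1}$, $\mathfrak g_0$ and $\mathfrak g_1$. (b) A linear map $\gamma:\mathfrak g_0\to\mathbb F$ satisfies $\gamma([X,Y])=\mathrm{str}\big(\mathrm{ad}X\circ\mathrm{ad}Y|_{\mathfrak g_0}\big)$ for all $X\in\mathfrak g_1$, $Y\in\mathfrak g_{-1}$ if and only if $\gamma(x_i\partial_j)=\delta_{ij}$, $\gamma(y_r\partial_j)=0$, $\gamma(x_iD_t)=0$ and $\gamma(y_rD_t)=-\delta_{rt}$ for all $i,j\in[1,m]$, $r,t\in[1,n]$. Consequently this $\gamma$ (the supertrace of $\mathfrak{gl}(m|n)$) is a semi-infinite character of $W(m,n)$, and it is the only one; its restriction to $\mathfrak h$ is $\mathcal E=\sum_{i=1}^m\epsilon_i-\sum_{j=1}^n\delta_j$.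
   Context: $\mathbb F$ algebraically closed of characteristic $0$, $m,n\ge1$. $\mathcal R=\mathbb F[x_1,\dots,x_m]\otimes\Lambda(y_1,\dots,y_n)$ ($x_i$ even, $y_s$ odd), graded by $\deg x_i=\deg y_s=1$. $\mathfrak g=W(m,n)$ is the Lie superalgebra of superderivations of $\mathcal R$, free over $\mathcal R$ on even $\partial_i$ ($\partial_ix_j=\delta_{ij}$, $\partial_iy_s=0$) and odd $D_t$ ($D_ty_s=\delta_{ts}$, $D_tx_j=0$); $\mathfrak g=\bigoplus_{i\ge-1}\mathfrak g_i$ with $\mathfrak g_i$ spanned by $f\partial_j,fD_t$, $f$ homogeneous of degree $i+1$, so $\mathfrak g_0=\mathrm{span}\{x_i\partial_j,y_r\partial_j,x_iD_t,y_rD_t\}\cong\mathfrak{gl}(m|n)$. $\mathrm{str}$ denotes the supertrace of an even linear endomorphism of the superspace $\mathfrak g_0$. For a $\mathbb Z$-graded Lie superalgebra $\mathbf g=\bigoplus_i\mathbf g_i$ with finite-dimensional pieces, a character $\gamma:\mathbf g_0\to\mathbb F$ is semi-infinite if (SI-1) $\mathbf g$ is generated by $\mathbf g_1,\mathbf g_0,\mathbf g_{-1}$ and (SI-2) $\gamma([X,Y])=\mathrm{str}(\mathrm{ad}X\circ\mathrm{ad}Y|_{\mathbf g_0})$ for all $X\in\mathbf g_1$, $Y\in\mathbf g_{-1}$. $\epsilon_i,\delta_s$ are the functionals on $\mathfrak h=\mathrm{span}\{x_i\partial_i,y_sD_s\}$ dual to this basis. *)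

(* Defs.v *)
From HB Require Import structures.
From mathcomp Require Import all_boot all_order all_algebra.
From mathcomp Require Import mpoly.

Set Implicit Arguments.
Unset Strict Implicit.
Unset Printing Implicit Defensive.

Import Order.TTheory GRing.Theory Num.Theory.
Local Open Scope ring_scope.

(* R = F[x_1..x_m] (x) Lambda(y_1..y_n) is represented by the coefficient
   function  u : {set 'I_n} -> {mpoly F[m]},  u = sum_S (u S) * y^S
   where y^S = y_{s_1} ... y_{s_k} with s_1 < ... < s_k.

   g = W(m,n) is free over R on d_j (j : 'I_m, even) and D_t (t : 'I_n, odd);
   an element X is represented by its coefficients  X : {ffun 'I_m + 'I_n -> R},
   X = sum_j X (inl j) d_j + sum_t X (inr t) D_t. *)

Section W.
Variables (F : fieldType) (m n : nat).

Definition RR := {ffun {set 'I_n} -> {mpoly F[m]}}.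
Definition GG := {ffun 'I_m + 'I_n -> RR}.

(* number of inversions between S and T: y^S y^T = (-1)^(inv S T) y^(S u T) *)
Definition inv (S T : {set 'I_n}) : nat :=
  #|[set p : 'I_n * 'I_n | [&& p.1 \in S, p.2 \in T & (p.2 < p.1)%N]]|.

Definition mulR (u v : RR) : RR :=
  [ffun U : {set 'I_n} =>
    \sum_(S : {set 'I_n}) \sum_(T : {set 'I_n} | (S :&: T == set0) && (S :|: T == U))
       ((-1) ^+ inv S T) *: (u S * v T)].

Definition dx (j : 'I_m) (u : RR) : RR := [ffun S => mderiv j (u S)].

(* the odd (left) derivation D_t of R: D_t y^(S u {t}) = (-1)^#{s in S, s < t} y^S *)
Definition dy (t : 'I_n) (u : RR) : RR :=
  [ffun S : {set 'I_n} =>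
     if t \in S then 0 else ((-1) ^+ #|[set s in S | (s < t)%N]|) *: u (t |: S)].

Definition dR (a : 'I_m + 'I_n) : RR -> RR :=
  match a with inl j => dx j | inr t => dy t end.

Definition isodd (a : 'I_m + 'I_n) : nat := if a is inr _ then 1 else 0.

Definition act (X : GG) (u : RR) : RR := \sum_(a : 'I_m + 'I_n) mulR (X a) (dR a u).

(* parity-p component of X (the parity of u y^S d_a is #|S| + isodd a) *)
Definition parG (p : bool) (X : GG) : GG :=
  [ffun a => [ffun S : {set 'I_n} =>
     if odd (#|S| + isodd a) == p then X a S else 0]].

Definition brh (p q : bool) (X Y : GG) : GG :=
  [ffun c => act X (Y c) - ((-1) ^+ (p && q)) *: act Y (X c)].

Definition br (X Y : GG) : GG :=
  \sum_(p : bool) \sum_(q : bool) brh p q (parG p X) (parG q Y).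

Definition homR (d : nat) (u : RR) : Prop :=
  forall S : {set 'I_n},
    if (#|S| <= d)%N then u S \is (d - #|S|)%N.-homog else u S == 0.

(* gpiece d X  <->  X is in g_(d-1), i.e. all coefficients homogeneous of
   degree d.  So g_{-1} = gpiece 0, g_0 = gpiece 1, g_1 = gpiece 2. *)
Definition gpiece (d : nat) (X : GG) : Prop := forall a, homR d (X a).

Inductive gen : GG -> Prop :=
| gen_piece d X : (d <= 2)%N -> gpiece d X -> gen X
| gen_add X Y : gen X -> gen Y -> gen (X + Y)
| gen_scale (c : F) X : gen X -> gen (c *: X)
| gen_br X Y : gen X -> gen Y -> gen (br X Y).

Definition varR (z : 'I_m + 'I_n) : RR :=
  match z with
  | inl i => [ffun S : {set 'I_n} => if S == set0 then 'X_i else 0]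
  | inr r => [ffun S : {set 'I_n} => if S == [set r] then 1 else 0]
  end.

(* basis of g_0:  eb z a = z * d_a, e.g. eb (inl i) (inl j) = x_i d_j,
   eb (inr r) (inr t) = y_r D_t *)
Definition eb (z a : 'I_m + 'I_n) : GG := [ffun c => if c == a then varR z else 0].

Definition coord (z a : 'I_m + 'I_n) (v : GG) : F :=
  match z with
  | inl i => (v a set0)@_(mnm1 i)
  | inr r => (v a [set r])@_(0%MM)
  end.

(* supertrace of an (even) endomorphism A of g_0, computed in the homogeneous
   basis eb z a (of parity isodd z + isodd a) *)
Definition str0 (A : GG -> GG) : F :=
  \sum_(z : 'I_m + 'I_n) \sum_(a : 'I_m + 'I_n)
     (-1) ^+ (isodd z + isodd a) * coord z a (A (eb z a)).

Definition linear_g0 (gamma : GG -> F) : Prop :=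
  forall (c : F) (u v : GG), gpiece 1 u -> gpiece 1 v ->
    gamma (c *: u + v) = c * gamma u + gamma v.

Definition character (gamma : GG -> F) : Prop :=
  linear_g0 gamma /\
  forall u v : GG, gpiece 1 u -> gpiece 1 v -> gamma (br u v) = 0.

Definition SI2 (gamma : GG -> F) : Prop :=
  forall X Y : GG, gpiece 2 X -> gpiece 0 Y ->
    gamma (br X Y) = str0 (fun v => br X (br Y v)).

Definition semi_infinite (gamma : GG -> F) : Prop :=
  character gamma /\ (forall X : GG, gen X) /\ SI2 gamma.

End W.

(* Main.v *)
Require Import Defs.
From HB Require Import structures.
From mathcomp Require Import all_boot all_order all_algebra.
From mathcomp Require Import mpoly.
From mathcomp Require Import zify ring.
Import GRing.Theory.
Local Open Scope ring_scope.
Set Warnings "-notation-overridden,-ambiguous-paths,-notation-incompatible-prefix".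

Section Base.
Variables (F : fieldType) (m n : nat).
Local Notation RR := (RR F m n).
Local Notation GG := (GG F m n).
Local Notation I := ('I_m + 'I_n)%type.
Implicit Types (al be : 'X_{1..m}) (S T U : {set 'I_n}) (u v w : RR) (X Y : GG) (a b e : I).

Definition sg (k : nat) : F := (-1) ^+ k.
Definition mono (al : 'X_{1..m}) (S : {set 'I_n}) : RR :=
  [ffun U => if U == S then 'X_[al] else 0].
Definition fldR u a : GG := [ffun c => if c == a then u else 0].
Definition fld al S a : GG := fldR (mono al S) a.

Lemma mulRDl c u v w : mulR (c *: u + v) w = c *: mulR u w + mulR v w.
Proof.
apply/ffunP=> U; rewrite !ffunE scaler_sumr -big_split /=; apply: eq_bigr => S _.
rewrite scaler_sumr -big_split /=; apply: eq_bigr => T _.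
by rewrite !ffunE mulrDl scalerDr -scalerAl !scalerA mulrC.
Qed.

Lemma mulRDr c u v w : mulR w (c *: u + v) = c *: mulR w u + mulR w v.
Proof.
apply/ffunP=> U; rewrite !ffunE scaler_sumr -big_split /=; apply: eq_bigr => S _.
rewrite scaler_sumr -big_split /=; apply: eq_bigr => T _.
by rewrite !ffunE mulrDr scalerDr -scalerAr !scalerA mulrC.
Qed.

Lemma mulR0l u : mulR (0 : RR) u = 0.
Proof.
apply/ffunP=> U; rewrite !ffunE big1 // => S _; rewrite big1 // => T _.
by rewrite ffunE mul0r scaler0.
Qed.

Lemma mulR0r u : mulR u (0 : RR) = 0.
Proof.
apply/ffunP=> U; rewrite !ffunE big1 // => S _; rewrite big1 // => T _.
by rewrite ffunE mulr0 scaler0.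
Qed.

Lemma mulRZl c u v : mulR (c *: u) v = c *: mulR u v.
Proof. by rewrite -[c *: u]addr0 mulRDl mulR0l addr0. Qed.
Lemma mulRZr c u v : mulR v (c *: u) = c *: mulR v u.
Proof. by rewrite -[c *: u]addr0 mulRDr mulR0r addr0. Qed.

Lemma dRDZ a c u v : dR a (c *: u + v) = c *: dR a u + dR a v.
Proof.
case: a => [j|t]; apply/ffunP=> S; rewrite !ffunE /=.
  by rewrite mderivD mderivZ.
by case: ifP => _; rewrite ?scaler0 ?addr0 // scalerDr !scalerA mulrC.
Qed.

Lemma dR0 a : dR a (0 : RR) = 0.
Proof. by case: a => [j|t]; apply/ffunP=> S; rewrite !ffunE /= ?mderiv0 ?ffunE ?scaler0 ?if_same. Qed.

Lemma actDl c X Y u : act (c *: X + Y) u = c *: act X u + act Y u.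
Proof.
rewrite /act scaler_sumr -big_split; apply: eq_bigr => a _ /=.
by rewrite !ffunE mulRDl.
Qed.

Lemma actDr c X u v : act X (c *: u + v) = c *: act X u + act X v.
Proof.
rewrite /act scaler_sumr -big_split; apply: eq_bigr => a _ /=.
by rewrite dRDZ mulRDr.
Qed.

Lemma act0l u : act (0 : GG) u = 0.
Proof. by rewrite /act big1 // => a _; rewrite ffunE mulR0l. Qed.
Lemma act0r X : act X (0 : RR) = 0.
Proof. by rewrite /act big1 // => a _; rewrite dR0 mulR0r. Qed.

Lemma parGDZ p c X Y : parG p (c *: X + Y) = c *: parG p X + parG p Y.
Proof.
apply/ffunP=> a; rewrite !ffunE; apply/ffunP=> S; rewrite !ffunE.
by case: ifP; rewrite ?scaler0 ?addr0.
Qed.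

Lemma brhDl p q c X1 X2 Y : brh p q (c *: X1 + X2) Y = c *: brh p q X1 Y + brh p q X2 Y.
Proof.
apply/ffunP=> a; rewrite !ffunE actDl actDr; set s := (_ ^+ _).
by rewrite scalerDr scalerBr !scalerA [s * c]mulrC -!scalerA; rewrite addrACA opprD.
Qed.

Lemma brhDr p q c X Y1 Y2 : brh p q X (c *: Y1 + Y2) = c *: brh p q X Y1 + brh p q X Y2.
Proof.
apply/ffunP=> a; rewrite !ffunE actDl actDr; set s := (_ ^+ _).
by rewrite scalerDr scalerBr !scalerA [s * c]mulrC -!scalerA; rewrite addrACA opprD.
Qed.

Lemma brDl c X1 X2 Y : br (c *: X1 + X2) Y = c *: br X1 Y + br X2 Y.
Proof.
rewrite /br scaler_sumr -big_split; apply: eq_bigr => p _ /=.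
rewrite scaler_sumr -big_split; apply: eq_bigr => q _ /=.
by rewrite parGDZ brhDl.
Qed.

Lemma brDr c X Y1 Y2 : br X (c *: Y1 + Y2) = c *: br X Y1 + br X Y2.
Proof.
rewrite /br scaler_sumr -big_split; apply: eq_bigr => p _ /=.
rewrite scaler_sumr -big_split; apply: eq_bigr => q _ /=.
by rewrite parGDZ brhDr.
Qed.

Lemma lin0 (V W : lmodType F) (f : V -> W) :
  (forall c x y, f (c *: x + y) = c *: f x + f y) -> f 0 = 0.
Proof.
move=> h; have := h 1 0 0; rewrite !scale1r !addr0 => /(congr1 (fun z => z - f 0)).
by rewrite subrr addrK => <-.
Qed.


Lemma monoE al S U : mono al S U = if U == S then 'X_[al] else 0.
Proof. by rewrite ffunE. Qed.

Lemma inv0S S : Defs.inv set0 S = 0%N.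
Proof.
rewrite /Defs.inv (_ : [set p | _] = set0) ?cards0 //.
by apply/setP=> p; rewrite !inE.
Qed.

Lemma invS0 S : Defs.inv S set0 = 0%N.
Proof.
rewrite /Defs.inv (_ : [set p | _] = set0) ?cards0 //.
by apply/setP=> p; rewrite !inE andbF.
Qed.

Lemma mulR_mono al S be T : mulR (mono al S) (mono be T) =
  if S :&: T == set0 then sg (Defs.inv S T) *: mono (al + be) (S :|: T) else 0.
Proof.
apply/ffunP=> U; rewrite !ffunE (bigD1 S) //= [X in _ + X]big1 ?addr0; last first.
  by move=> S' /negbTE nS; apply: big1 => T' _; rewrite !ffunE nS mul0r scaler0.
case: ifP => hST.
- case: (eqVneq U (S :|: T)) => [->|nU].
  + rewrite (bigD1 T) /=; last by rewrite hST eqxx.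
    rewrite [X in _ + X]big1 ?addr0; last first.
      by move=> T' /andP [_ /negbTE nT]; rewrite !ffunE nT mulr0 scaler0.
    by rewrite !ffunE !eqxx mpolyXD.
  + rewrite big1; last first.
      move=> T' /andP[_ /eqP hU]; rewrite !ffunE eqxx.
      case: eqP => [eT|_]; last by rewrite mulr0 scaler0.
      by move: nU; rewrite -hU eT eqxx.
    by rewrite !ffunE (negbTE nU) scaler0.
- rewrite big1 ?ffunE //.
  move=> T' /andP[h _]; rewrite !ffunE eqxx.
  case: eqP => [eT|_]; last by rewrite mulr0 scaler0.
  by move: h; rewrite eT hST.
Qed.

Lemma mulR1l w : mulR (mono 0 set0) w = w.
Proof.
apply/ffunP=> U; rewrite ffunE (bigD1 set0) //= [X in _ + X]big1 ?addr0; last first.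
  by move=> S' /negbTE nS; apply: big1 => T _; rewrite !ffunE nS mul0r scaler0.
rewrite (bigD1 U) /=; last by rewrite set0I set0U !eqxx.
rewrite [X in _ + X]big1 ?addr0; last first.
  by move=> T /andP[/andP[_]]; rewrite set0U => /eqP ->; rewrite eqxx.
by rewrite !ffunE eqxx mpolyX0 mul1r inv0S expr0 scale1r.
Qed.

Lemma dx_mono j al S : dx j (mono al S) = (al j)%:R *: mono (al - U_(j))%MM S.
Proof.
apply/ffunP=> U; rewrite !ffunE; case: eqP => _; first by rewrite mderivX.
by rewrite mderiv0 scaler0.
Qed.

Lemma dy_mono t al S : dy t (mono al S) =
  if t \in S then sg #|[set s in S :\ t | (s < t)%N]| *: mono al (S :\ t) else 0.
Proof.
apply/ffunP=> U; rewrite /mono !ffunE.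
case: (boolP (t \in S)) => tS; rewrite !ffunE.
  case: (boolP (t \in U)) => tU.
    case: eqP => [eU|_]; last by rewrite /= !scaler0.
    by move: tU; rewrite eU setD11.
  case: (eqVneq U (S :\ t)) => [eU|nU].
    by rewrite eU setD1K // eqxx.
  case: eqP => [eS|_]; last by rewrite /= !scaler0.
  by move: nU; rewrite -eS setU1K // eqxx.
case: ifP => // tU.
case: eqP => [eS|_]; last by rewrite /= !scaler0.
by move: tS; rewrite -eS setU11.
Qed.

Definition ParR (p : bool) u := forall U, odd #|U| != p -> u U = 0.

Lemma ParR_mono al S : ParR (odd #|S|) (mono al S).
Proof. by move=> U hU; rewrite ffunE; case: eqP => // eU; move: hU; rewrite eU eqxx. Qed.

Lemma parG_fldR p q u a : ParR q u ->
  parG p (fldR u a) = if (q (+) odd (isodd a)) == p then fldR u a else 0.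
Proof.
move=> hu; apply/ffunP=> c; apply/ffunP=> U.
have E : (if (q (+) odd (isodd a)) == p then fldR u a else 0) c U =
   if (q (+) odd (isodd a)) == p then fldR u a c U else 0.
  by case: ifP; rewrite ?ffunE.
rewrite E /fldR !ffunE.
case: (eqVneq c a) => [->|nc] /=; last by rewrite !ffunE !if_same.
case: (eqVneq (odd #|U|) q) => hU.
  by rewrite oddD hU.
by rewrite hu // !if_same.
Qed.

Lemma fldRDZ c u v a : fldR (c *: u + v) a = c *: fldR u a + fldR v a.
Proof. by apply/ffunP=> b; rewrite !ffunE; case: ifP; rewrite ?scaler0 ?addr0. Qed.

Lemma fldR0 a : fldR 0 a = 0.
Proof. by apply/ffunP=> b; rewrite !ffunE if_same. Qed.

Lemma fldRZ c u a : fldR (c *: u) a = c *: fldR u a.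
Proof. by rewrite -[c *: u]addr0 fldRDZ fldR0 addr0. Qed.

Lemma act_fldR u a v : act (fldR u a) v = mulR u (dR a v).
Proof.
rewrite /act (bigD1 a) //= big1 ?addr0 ?ffunE ?eqxx // => b nb.
by rewrite ffunE (negbTE nb) mulR0l.
Qed.

Lemma brh_fldR p q u a v b : brh p q (fldR u a) (fldR v b) =
  fldR (mulR u (dR a v)) b - ((-1) ^+ (p && q)) *: fldR (mulR v (dR b u)) a.
Proof.
apply/ffunP=> c; rewrite !ffunE !act_fldR.
by case: eqP => _; case: eqP => _; rewrite ?dR0 ?mulR0r ?scaler0 ?subr0.
Qed.

Lemma brh0l p q Y : brh p q 0 Y = 0.
Proof. by apply: (@lin0 _ _ (fun X => brh p q X Y)) => c x y; rewrite brhDl. Qed.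
Lemma brh0r p q X : brh p q X 0 = 0.
Proof. by apply: (@lin0 _ _ (fun Y => brh p q X Y)) => c x y; rewrite brhDr. Qed.

Lemma br_fldR pu pv u a v b : ParR pu u -> ParR pv v ->
  br (fldR u a) (fldR v b) = fldR (mulR u (dR a v)) b -
   ((-1) ^+ ((pu (+) odd (isodd a)) && (pv (+) odd (isodd b)))) *: fldR (mulR v (dR b u)) a.
Proof.
move=> hu hv; rewrite /br !big_bool /= !(parG_fldR _ _ _ _ hu) !(parG_fldR _ _ _ _ hv).
case: (pu (+) _); case: (pv (+) _); by rewrite /= ?brh0l ?brh0r ?addr0 ?add0r brh_fldR.
Qed.

Lemma fldE al S a b U : fld al S a b U = if (b == a) && (U == S) then 'X_[al] else 0.
Proof. rewrite /fld /fldR !ffunE; case: (b == a) => /=; last by rewrite ffunE. by rewrite ffunE. Qed.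

Lemma scaleGE (c : F) X b : (c *: X) b = c *: X b.
Proof. by rewrite ffunE. Qed.
Lemma scaleRE (c : F) u U : (c *: u) U = c *: u U.
Proof. by rewrite ffunE. Qed.

Lemma GG_decomp X :
  X = \sum_a \sum_S \sum_(al <- msupp (X a S)) (X a S)@_al *: fld al S a.
Proof.
apply/ffunP=> b; apply/ffunP=> U; rewrite !sum_ffunE.
rewrite (bigD1 b) //= [X in _ + X]big1 ?addr0; last first.
  move=> a nab; rewrite !sum_ffunE big1 // => S _; rewrite !sum_ffunE big1 // => al _.
  by rewrite /= scaleGE scaleRE fldE eq_sym (negbTE nab) /= scaler0.
rewrite !sum_ffunE (bigD1 U) //= [X in _ + X]big1 ?addr0; last first.
  move=> S nS; rewrite !sum_ffunE big1 // => al _.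
  by rewrite /= scaleGE scaleRE fldE eqxx eq_sym (negbTE nS) /= scaler0.
rewrite !sum_ffunE [LHS]mpolyE; apply: eq_bigr => al _.
by rewrite /= scaleGE scaleRE fldE !eqxx.
Qed.

Lemma GG_ind (P : GG -> Prop) X : P 0 ->
  (forall c x y, P x -> P y -> P (c *: x + y)) ->
  (forall al S a, al \in msupp (X a S) -> P (fld al S a)) -> P X.
Proof.
move=> P0 Pl Pf; rewrite (GG_decomp X).
have Padd x y : P x -> P y -> P (x + y) by move=> px py; rewrite -[x]scale1r; exact: Pl.
apply: big_ind => // a _; apply: big_ind => // S _.
rewrite big_seq; apply: big_ind => // al hal.
by rewrite -[_ *: fld _ _ _]addr0; apply: Pl => //; exact: Pf.
Qed.

Lemma gpiece_deg d X a S al : gpiece d X -> al \in msupp (X a S) -> (mdeg al + #|S| = d)%N.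
Proof.
move=> h hal; have := h a S; case: leqP => hS.
  by move/dhomogP/(_ _ hal) => ->; rewrite subnK.
by move/eqP=> e; move: hal; rewrite e mcoeff_msupp mcoeff0 eqxx.
Qed.

Lemma gpiece_fld d al S a : (mdeg al + #|S| = d)%N -> gpiece d (fld al S a).
Proof.
move=> hd b U; rewrite fldE; case: leqP => hU.
  case: ifP => [/andP[_ /eqP ->]|_]; last exact: dhomog0.
  by rewrite dhomogX -hd addnK.
case: ifP => // /andP[_ /eqP eU]; move: hU; rewrite eU -hd.
by rewrite ltnNge leq_addl.
Qed.

Lemma gpiece0 d : gpiece d (0 : GG).
Proof. by move=> a S; rewrite !ffunE; case: ifP => _; [exact: dhomog0|]. Qed.

Lemma gpieceDZ d c X Y : gpiece d X -> gpiece d Y -> gpiece d (c *: X + Y).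
Proof.
move=> hX hY a S; have := hX a S; have := hY a S; rewrite !ffunE.
case: ifP => _.
  by move=> h1 h2; apply: dhomogD => //; exact: dhomogZ.
by move=> /eqP -> /eqP ->; rewrite scaler0 addr0.
Qed.

Lemma mulR_mono_disj al S be T : S :&: T = set0 ->
  mulR (mono al S) (mono be T) = sg (Defs.inv S T) *: mono (al + be) (S :|: T).
Proof. by move=> h; rewrite mulR_mono h eqxx. Qed.

Lemma sg_neq0 k : sg k != 0.
Proof. by rewrite /sg expf_neq0 // oppr_eq0 oner_eq0. Qed.

Lemma genDZ c X Y : gen X -> gen Y -> gen (c *: X + Y).
Proof. by move=> h1 h2; apply: gen_add => //; apply: gen_scale. Qed.

Lemma gen_scale_inv (k : F) X : k != 0 -> gen (k *: X) -> gen X.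
Proof. by move=> hk h; rewrite -[X]scale1r -(mulVf hk) -scalerA; apply: gen_scale. Qed.

Lemma gen_small al S a : (mdeg al + #|S| <= 2)%N -> gen (fld al S a).
Proof. by move=> h; apply: (gen_piece (d := (mdeg al + #|S|)%N)) => //; exact: gpiece_fld. Qed.

Definition afree al S a := match a with inl j => al j == 0%N | inr t => t \notin S end.

Lemma dR_free al S a : afree al S a -> dR a (mono al S) = 0.
Proof.
by case: a => [j|t] /= h; [rewrite dx_mono (eqP h) scale0r | rewrite dy_mono (negbTE h)].
Qed.

Variables (charF : [pchar F] =i pred0) (hm : (0 < m)%N) (hn : (0 < n)%N).
Let i0 : 'I_m := Ordinal hm.
Let t0 : 'I_n := Ordinal hn.

Lemma natF_neq0 k : (0 < k)%N -> (k%:R : F) != 0.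
Proof. by move/pcharf0P: charF => h; rewrite h -lt0n. Qed.

Lemma T1 d (IH : forall al S a, (mdeg al + #|S|)%N = d -> gen (fld al S a)) al1 S1 al2 S2 a :
  (mdeg al1 + #|S1| = 2)%N -> S1 :&: S2 = set0 -> afree al1 S1 a ->
  (mdeg al2 + #|S2|).+1 = d -> gen (fld (al1 + al2) (S1 :|: S2) a).
Proof.
move=> h1 hI hf h2.
have gX : gen (fld al1 S1 (inl i0)) by apply: gen_small; rewrite h1.
have gY : gen (fld (al2 + U_(i0)) S2 a) by apply: IH; rewrite mdegD mdeg1 addn1 addSn.
have := gen_br gX gY.
rewrite /fld (br_fldR _ _ _ _ _ _ (ParR_mono _ _) (ParR_mono _ _)).
rewrite (dR_free _ _ _ hf) mulR0r fldR0 scaler0 subr0 /= dx_mono addmK mulRZr mulR_mono_disj //.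
rewrite scalerA fldRZ => h; apply: gen_scale_inv h.
rewrite mulf_neq0 ?sg_neq0 // natF_neq0 //.
by rewrite mnmDE mnm1E eqxx addn1.
Qed.

Lemma mnm_B1 i be al0 : be i = 0%N -> (1 <= al0 i)%N ->
  (U_(i) + be + (al0 - U_(i)) = al0 + be)%MM.
Proof.
move=> hb h; apply/mnmP => j; rewrite !mnmDE mnmBE mnm1E.
by case: eqP => [<-|_] /=; lia.
Qed.

Lemma UBU (i : 'I_m) be : (U_(i) + be - U_(i) = be)%MM.
Proof. by rewrite addmC addmK. Qed.

Lemma B1 i be S al0 : be i = 0%N -> (2 <= al0 i)%N ->
  gen (fld (U_(i) + be) S (inl i)) -> gen (fld al0 set0 (inl i)) ->
  gen (fld (al0 + be) S (inl i)).
Proof.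
move=> hb h0 gX gY; have := gen_br gX gY.
rewrite /fld (br_fldR _ _ _ _ _ _ (ParR_mono _ _) (ParR_mono _ _)) /= !dx_mono.
rewrite !mulRZr !mulR_mono_disj ?setI0 ?set0I // invS0 inv0S setU0 set0U cards0.
rewrite andbF expr0 scale1r /sg expr0 !scale1r UBU mnm_B1 //; last by lia.
rewrite !fldRZ mnmDE mnm1E eqxx hb addn0 -scalerBl -(natrB _ (ltnW h0)) => h.
apply: gen_scale_inv h; apply: natF_neq0; lia.
Qed.

Lemma card_set0P (t : 'I_n) : #|[set s in (set0 : {set 'I_n}) | (s < t)%N]| = 0%N.
Proof. by apply/eqP; rewrite cards_eq0; apply/eqP/setP=> x; rewrite !inE. Qed.

Lemma B2 i al0 : (1 <= al0 i)%N ->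
  gen (fld al0 [set t0] (inl i)) -> gen (fld (al0 + U_(i)) [set t0] (inr t0)) ->
  gen (fld (U_(i) + U_(i) + al0) set0 (inl i)).
Proof.
move=> h0 gY g2.
have gX : gen (fld (U_(i) + U_(i)) set0 (inr t0)) by apply: gen_small; rewrite mdegD mdeg1 cards0.
have := gen_br gX gY.
rewrite /fld (br_fldR _ _ _ _ _ _ (ParR_mono _ _) (ParR_mono _ _)) /= dx_mono dy_mono set11.
rewrite setDv card_set0P /sg expr0 scale1r mulRZr !mulR_mono_disj ?setI0 ?set0I //.
rewrite !invS0 !setU0 /sg expr0 !scale1r cards0 cards1 /= expr1 UBU.
rewrite mnmDE mnm1E eqxx fldRZ scaleN1r opprK => h.
have -> : fldR (mono (U_(i) + U_(i) + al0) set0) (inl i) =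
  (- 2%:R) *: fldR (mono (al0 + U_(i)) [set t0]) (inr t0) +
  (fldR (mono (U_(i) + U_(i) + al0) set0) (inl i) +
   2%:R *: fldR (mono (al0 + U_(i)) [set t0]) (inr t0)).
  by rewrite scaleNr addrCA addNr addr0.
by apply: genDZ.
Qed.

Lemma mdeg_pos al : (0 < mdeg al)%N -> exists j, (0 < al j)%N.
Proof.
move=> h; case: (pickP (fun j => 0 < al j)%N) => [j hj|h0]; first by exists j.
move: h; rewrite mdegE big1 // => j _; move: (h0 j); rewrite lt0n => /negbFE/eqP.
by [].
Qed.

Lemma lemU al j : (0 < al j)%N -> (U_(j) <= al)%MM.
Proof. by move=> h; apply/mnm_lepP => x; rewrite mnm1E; case: eqP => [<-|]. Qed.

Lemma mdeg_sub al be : (be <= al)%MM -> mdeg (al - be) = (mdeg al - mdeg be)%N.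
Proof. by move=> h; rewrite -{2}(submK h) mdegD addnK. Qed.

Lemma addm_sub al be : (be <= al)%MM -> al = (be + (al - be))%MM.
Proof. by move=> h; rewrite addmC submK. Qed.

Lemma pick2m al : (2 <= mdeg al)%N -> exists j k, (U_(j) + U_(k) <= al)%MM.
Proof.
move=> h; have [j hj] : exists j, (0 < al j)%N by apply: mdeg_pos; lia.
have [k hk] : exists k, (0 < (al - U_(j))%MM k)%N.
  by apply: mdeg_pos; rewrite mdeg_sub ?lemU // mdeg1; lia.
exists j, k; apply/mnm_lepP => x; move: hk; rewrite mnmBE mnmDE !mnm1E.
case: (eqVneq j k) => [ejk|njk]; subst; rewrite ?eqxx /=.
  by case: (eqVneq k x) => [ekx|nkx] /=; subst; lia.
case: (eqVneq j x) => [ejx|njx]; case: (eqVneq k x) => [ekx|nkx] /=; subst; try lia.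
by rewrite eqxx in njk.
Qed.

Definition zi i al : 'X_{1..m} := [multinom (if j == i then 0%N else al j) | j < m].

Lemma ziE i al j : zi i al j = if j == i then 0%N else al j.
Proof. by rewrite mnmE. Qed.

Lemma mdeg_zi i al : mdeg al = (al i + mdeg (zi i al))%N.
Proof.
rewrite !mdegE (bigD1 i) //= [in RHS](bigD1 i) //= ziE eqxx add0n; congr addn.
by apply: eq_bigr => j /negbTE h; rewrite ziE h.
Qed.

Lemma zi_le i al : (zi i al <= al)%MM.
Proof. by apply/mnm_lepP => j; rewrite ziE; case: ifP. Qed.

Section Step.
Variables (d : nat) (IH : forall al S a, (mdeg al + #|S|)%N = d -> gen (fld al S a)).
Variable (hd : (2 <= d)%N).

Lemma T1' al S a al1 S1 al2 S2 : al = (al1 + al2)%MM -> S = S1 :|: S2 ->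
  S1 :&: S2 = set0 -> (mdeg al1 + #|S1| = 2)%N -> afree al1 S1 a ->
  (mdeg al + #|S| = d.+1)%N -> gen (fld al S a).
Proof.
move=> -> -> hI h1 hf hdeg; apply: (T1 _ IH) => //.
by move: hdeg; rewrite mdegD cardsU hI cards0 subn0; lia.
Qed.

Lemma caseA al S a s1 s2 : s1 != s2 -> s1 \in S -> s2 \in S ->
  afree 0%MM [set s1; s2] a -> (mdeg al + #|S| = d.+1)%N -> gen (fld al S a).
Proof.
move=> ne h1 h2 hf hdeg.
apply: (T1' _ _ _ 0%MM [set s1; s2] al (S :\: [set s1; s2])) => //.
- by rewrite add0m.
- apply/setP=> x; rewrite !inE.
  case: (eqVneq x s1) => [->|_]; first by rewrite h1.
  case: (eqVneq x s2) => [->|_]; first by rewrite h2 orbT.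
  by [].
- by apply/setP=> x; rewrite !inE; case: (_ || _).
- by rewrite mdeg0 cards2 ne.
Qed.

Lemma stepR al S t : (mdeg al + #|S| = d.+1)%N -> gen (fld al S (inr t)).
Proof.
move=> hdeg.
case: (ltnP 1 #|S :\ t|) => hV.
  case/card_gt1P: hV => s1 [s2 [h1 h2 ne]].
  move: h1 h2; rewrite !in_setD1 => /andP[n1 h1] /andP[n2 h2].
  apply: (caseA _ _ _ s1 s2 ne) => //=.
  by rewrite !inE negb_or eq_sym n1 eq_sym n2.
have hS : (#|S| <= #|S :\ t| + 1)%N by rewrite (cardsD1 t S) addnC leq_add2l; case: (t \in S).
case: (ltnP 0 #|S :\ t|) => hV0.
  have /cards1P [s hs] : #|S :\ t| == 1%N by rewrite eqn_leq hV.
  have hsS : s \in S :\ t by rewrite hs set11.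
  move: (hsS); rewrite in_setD1 => /andP[nst sS].
  have [j hj] : exists j, (0 < al j)%N by apply: mdeg_pos; lia.
  apply: (T1' _ _ _ U_(j) [set s] (al - U_(j)) (S :\ s)) => //.
  - by apply: addm_sub; apply: lemU.
  - by rewrite setD1K.
  - by apply/setP=> x; rewrite !inE; case: eqP.
  - by rewrite mdeg1 cards1.
  - by rewrite /= inE eq_sym.
have [j [k hjk]] : exists j k, (U_(j) + U_(k) <= al)%MM by apply: pick2m; lia.
apply: (T1' _ _ _ (U_(j) + U_(k)) set0 (al - (U_(j) + U_(k))) S) => //.
- exact: addm_sub.
- by rewrite set0U.
- by rewrite set0I.
- by rewrite mdegD !mdeg1 cards0.
- by rewrite /= in_set0.
Qed.

Lemma stepL al S i : (mdeg al + #|S| = d.+1)%N -> gen (fld al S (inl i)).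
Proof.
move=> hdeg.
case: (ltnP 1 #|S|) => hS.
  case/card_gt1P: hS => s1 [s2 [h1 h2 ne]].
  by apply: (caseA _ _ _ s1 s2 ne) => //=; rewrite mnm0E.
have hzi := mdeg_zi i al.
case: (ltnP 0 #|S|) => hS0.
  have /cards1P [s hs] : #|S| == 1%N by rewrite eqn_leq hS.
  rewrite hs in hdeg *; rewrite cards1 in hdeg.
  case: (ltnP 0 (mdeg (zi i al))) => hz.
    have [j hj] := mdeg_pos _ hz.
    move: hj; rewrite ziE; case: eqP => // nji hj.
    apply: (T1' _ _ _ U_(j) [set s] (al - U_(j)) set0) => //.
    - by apply: addm_sub; apply: lemU.
    - by rewrite setU0.
    - by rewrite setI0.
    - by rewrite mdeg1 cards1.
    - by rewrite /= mnm1E; apply/eqP; case: eqP.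
    - by rewrite cards1.
  rewrite -[al]addm0; apply: B1.
  - by rewrite mnm0E.
  - lia.
  - by apply: gen_small; rewrite addm0 mdeg1 cards1.
  - by apply: IH; rewrite cards0; lia.
have S0 : S = set0 by apply/eqP; rewrite -cards_eq0; lia.
rewrite S0 in hdeg *; rewrite cards0 addn0 in hdeg.
case: (ltnP 1 (mdeg (zi i al))) => hz.
  have [j [k hjk]] := pick2m _ hz.
  have hle : (U_(j) + U_(k) <= al)%MM := lepm_trans hjk (zi_le i al).
  apply: (T1' _ _ _ (U_(j) + U_(k)) set0 (al - (U_(j) + U_(k))) set0) => //.
  - exact: addm_sub.
  - by rewrite setU0.
  - by rewrite setI0.
  - by rewrite mdegD !mdeg1 cards0.
  - move/mnm_lepP: hjk => /(_ i); rewrite ziE eqxx /=.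
    by rewrite leqn0.
  - by rewrite cards0 addn0.
case: (ltnP 0 (mdeg (zi i al))) => hz0.
  have /mdeg1P [j /eqP hj] : mdeg (zi i al) == 1%N by rewrite eqn_leq hz.
  have nji : j != i.
    apply/eqP=> eji; have := ziE i al i; rewrite eqxx hj eji mnm1E eqxx; discriminate.
  have hjal : (0 < al j)%N by have := ziE i al j; rewrite (negbTE nji) hj mnm1E eqxx => <-.
  rewrite (addm_sub _ _ (lemU _ _ hjal)) addmC; apply: B1.
  - by rewrite mnm1E (negbTE nji).
  - by rewrite mnmBE mnm1E (negbTE nji) subn0; lia.
  - by apply: gen_small; rewrite mdegD !mdeg1 cards0.
  - by apply: IH; rewrite mdeg_sub ?lemU // mdeg1 cards0; lia.
have hle : (U_(i) + U_(i) <= al)%MM.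
  apply/mnm_lepP => x; rewrite mnmDE mnm1E.
  case: eqP => [<-|nx] /=; first by lia.
  by [].
rewrite (addm_sub _ _ hle); apply: B2.
- by rewrite mnmBE mnmDE mnm1E eqxx /=; lia.
- by apply: IH; rewrite mdeg_sub // mdegD mdeg1 cards1; lia.
- apply: stepR; rewrite mdegD mdeg_sub // mdegD !mdeg1 cards1; lia.
Qed.

End Step.

Lemma gen_fld_all d al S a : (mdeg al + #|S| = d)%N -> gen (fld al S a).
Proof.
elim: d al S a => [|d IH] al S a hd; first by apply: gen_small; rewrite hd.
case: (leqP d.+1 2) => h; first by apply: gen_small; rewrite hd.
case: a => [i|t]; [apply: (stepL _ IH) | apply: (stepR _ IH)] => //; lia.
Qed.

Lemma gen_all X : gen X.
Proof.
apply: (GG_ind (@gen F m n)) => //.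
- by apply: (gen_piece (d := 0%N)) => //; exact: gpiece0.
- by move=> c x y; apply: genDZ.
- by move=> al S a _; apply: (gen_fld_all (mdeg al + #|S|)).
Qed.

Definition coordR (z : I) u : F :=
  match z with inl i => (u set0)@_(U_(i)) | inr r => (u [set r])@_(0%MM) end.
Definition cst u : F := (u set0)@_(0%MM).
Definition st X : F := \sum_(z : I) sg (isodd z) * coordR z (X z).

Lemma coordE (z : I) a X : Defs.coord z a X = coordR z (X a).
Proof. by case: z. Qed.

Lemma coordR_lin z c u v : coordR z (c *: u + v) = c * coordR z u + coordR z v.
Proof. by case: z => [i|r] /=; rewrite !ffunE mcoeffD mcoeffZ. Qed.

Lemma coordR0 z : coordR z 0 = 0.
Proof. by case: z => [i|r] /=; rewrite ffunE mcoeff0. Qed.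

Lemma st_lin c X Y : st (c *: X + Y) = c * st X + st Y.
Proof.
rewrite /st mulr_sumr -big_split; apply: eq_bigr => z _ /=.
by rewrite !ffunE coordR_lin mulrDr mulrCA.
Qed.

Lemma st0 : st 0 = 0.
Proof. by rewrite /st big1 // => z _; rewrite ffunE coordR0 mulr0. Qed.

Lemma str0_ext (A A1 A2 : GG -> GG) c : (forall x : GG, A x = c *: A1 x + A2 x) ->
  str0 A = c * str0 A1 + str0 A2.
Proof.
move=> h; rewrite /str0 mulr_sumr -big_split; apply: eq_bigr => z _ /=.
rewrite mulr_sumr -big_split; apply: eq_bigr => a _ /=.
by rewrite h !coordE !ffunE coordR_lin mulrDr mulrCA.
Qed.

Lemma str00 (A : GG -> GG) : (forall x : GG, A x = 0) -> str0 A = 0.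
Proof.
move=> h; rewrite /str0 big1 // => z _; rewrite big1 // => a _.
by rewrite h coordE ffunE coordR0 mulr0.
Qed.

Lemma st_fldR w e : st (fldR w e) = sg (isodd e) * coordR e w.
Proof.
rewrite /st (bigD1 e) //= big1 ?addr0 ?ffunE ?eqxx // => z nz.
by rewrite ffunE (negbTE nz) coordR0 mulr0.
Qed.

Lemma coordR_fldR z b w e : coordR z (fldR w e b) = (b == e)%:R * coordR z w.
Proof. by rewrite ffunE; case: eqP => _; rewrite ?mul1r ?mul0r ?coordR0. Qed.

Definition va (z : I) : 'X_{1..m} := if z is inl i then U_(i) else 0%MM.
Definition vS (z : I) : {set 'I_n} := if z is inr r then [set r] else set0.

Lemma varR_mono z : varR F z = mono (va z) (vS z).
Proof.
by case: z => [i|r]; apply/ffunP=> U; rewrite !ffunE //= mpolyX0.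
Qed.

Lemma ebE z a : eb F z a = fldR (varR F z) a.
Proof. by []. Qed.

Lemma mulR1r w : mulR w (mono 0 set0) = w.
Proof.
apply/ffunP=> U; rewrite ffunE (bigD1 U) //= [X in _ + X]big1 ?addr0; last first.
  move=> S nS; apply: big1 => T /andP[_ /eqP hU].
  rewrite !ffunE; case: eqP => [eT|_]; last by rewrite mulr0 scaler0.
  by move: nS; rewrite -hU eT setU0 eqxx.
rewrite (bigD1 set0) /=; last by rewrite setI0 setU0 !eqxx.
rewrite [X in _ + X]big1 ?addr0; last first.
  by move=> T /andP[_ nT]; rewrite !ffunE (negbTE nT) mulr0 scaler0.
by rewrite !ffunE eqxx mpolyX0 mulr1 invS0 expr0 scale1r.
Qed.

Lemma dR_const e : dR e (mono 0 set0) = 0.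
Proof. by apply: dR_free; case: e => [j|t] /=; rewrite ?mnm0E ?in_set0. Qed.

Lemma eq_inl (i j : 'I_m) : (inl j == inl i :> I) = (j == i). Proof. by []. Qed.
Lemma eq_inr (i j : 'I_n) : (inr j == inr i :> I) = (j == i). Proof. by []. Qed.
Lemma eq_inlr (i : 'I_m) (j : 'I_n) : (inl i == inr j :> I) = false. Proof. by []. Qed.
Lemma eq_inrl (i : 'I_m) (j : 'I_n) : (inr j == inl i :> I) = false. Proof. by []. Qed.

Lemma submm al : (al - al = 0)%MM.
Proof. by apply/mnmP => x; rewrite mnmBE mnm0E subnn. Qed.

Lemma dR_var a z : dR a (varR F z) = (a == z)%:R *: mono 0 set0.
Proof.
rewrite varR_mono; case: a => [j|t]; case: z => [i|r] /=.
- rewrite dx_mono mnm1E eq_inl eq_sym.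
  case: eqP => [->|_]; last by rewrite !scale0r.
  by rewrite submm.
- by rewrite dx_mono mnm0E ?eq_inlr !scale0r.
- by rewrite dy_mono in_set0 ?eq_inrl scale0r.
- rewrite dy_mono inE eq_inr.
  case: eqP => [->|_]; last by rewrite scale0r.
  by rewrite setDv card_set0P /sg expr0.
Qed.

Lemma eqU (i j : 'I_m) : (U_(i) == U_(j))%MM = (j == i).
Proof.
apply/eqP/eqP => [/mnmP/(_ j)|->//]; rewrite !mnm1E eqxx.
by case: (eqVneq i j) => [->//|_].
Qed.

Lemma eqset1 (t r : 'I_n) : ([set t] == [set r]) = (t == r).
Proof. by apply/eqP/eqP => [/set1_inj|->]. Qed.

Lemma set1_neq0 (r : 'I_n) : ([set r] == set0) = false.
Proof. by rewrite -cards_eq0 cards1. Qed.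

Lemma coordR_var e z : coordR e (varR F z) = (e == z)%:R.
Proof.
rewrite varR_mono; case: e => [j|t]; case: z => [i|r] /=; rewrite ffunE.
- by rewrite eqxx mcoeffX eq_inl eqU.
- by rewrite eq_sym set1_neq0 mcoeff0.
- by rewrite set1_neq0 mcoeff0.
- by rewrite eqset1 eq_inr; case: eqP => _; rewrite ?mcoeffX ?eqxx ?mcoeff0.
Qed.


Lemma coordR_cst z w : coordR z w = cst (dR z w).
Proof.
case: z => [i|r] /=; rewrite /cst ffunE.
  by rewrite mcoeff_deriv add0m mnm0E mulr1n.
by rewrite in_set0 card_set0P /sg expr0 scale1r setU0.
Qed.

Lemma cst_scale c w : cst (c *: w) = c * cst w.
Proof. by rewrite /cst ffunE mcoeffZ. Qed.

Lemma coordR_scale z c w : coordR z (c *: w) = c * coordR z w.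
Proof. by rewrite -[c *: w]addr0 coordR_lin coordR0 addr0. Qed.

Lemma ParR_dR p u a : ParR p u -> ParR (p (+) odd (isodd a)) (dR a u).
Proof.
move=> hu U hU; case: a hU => [j|t] /= hU; rewrite ffunE.
  by rewrite ?addbF in hU; rewrite hu // mderiv0.
case: ifP => // tU; rewrite hu ?scaler0 //.
by rewrite cardsU1 tU /=; move: hU; case: (odd _); case: (p).
Qed.

Lemma cst_Par w : ParR true w -> cst w = 0.
Proof. by move=> h; rewrite /cst h ?cards0 // mcoeff0. Qed.

Lemma cardsU1P (t r : 'I_n) U : t \notin U ->
  #|[set s in t |: U | (s < r)%N]| = ((t < r)%N + #|[set s in U | (s < r)%N]|)%N.
Proof.
move=> tU; rewrite (cardsD1 t) inE setU11 /=; congr addn; apply: eq_card => x.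
rewrite !inE; case: eqP => [->|] /=; first by rewrite (negbTE tU).
by [].
Qed.

Lemma supercomm a e u : dR a (dR e u) = sg (isodd a * isodd e) *: dR e (dR a u).
Proof.
case: a => [j|t]; case: e => [i|r] /=; rewrite /sg.
- by rewrite expr0 scale1r; apply/ffunP=> U; rewrite !ffunE mderiv_comm.
- rewrite expr0 scale1r; apply/ffunP=> U; rewrite !ffunE.
  by case: ifP => _; rewrite ?mderiv0 // mderivZ.
- rewrite expr0 scale1r; apply/ffunP=> U; rewrite !ffunE.
  by case: ifP => _; rewrite ?mderiv0 // mderivZ.
apply/ffunP=> U; rewrite !ffunE.
case: (eqVneq t r) => [<-|ntr].
  by rewrite !setU11 /= !scaler0 !if_same scaler0.
case: (boolP (t \in U)) => tU.
  by rewrite /= in_setU1 tU orbT /= !scaler0 if_same scaler0.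
case: (boolP (r \in U)) => rU.
  by rewrite /= in_setU1 rU orbT /= !scaler0.
rewrite /= !in_setU1 (negbTE tU) (negbTE rU) ?orbF (negbTE ntr) eq_sym (negbTE ntr).
rewrite !cardsU1P // setUCA !scalerA; congr (_ *: _).
rewrite !exprD; case: ltngtP ntr => h ntr //=; try ring.
by rewrite (ord_inj h) eqxx in ntr.
Qed.

Lemma ParR_var z : ParR (odd #|vS z|) (varR F z).
Proof. by rewrite varR_mono; exact: ParR_mono. Qed.

Lemma brZr c X Y : br X (c *: Y) = c *: br X Y.
Proof.
have h0 : br X 0 = 0 by apply: (@lin0 _ _ (fun Y => br X Y)) => c' x y; rewrite brDr.
by rewrite -[c *: Y]addr0 brDr h0 addr0.
Qed.

Lemma brZl c X Y : br (c *: X) Y = c *: br X Y.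
Proof.
have h0 : br 0 Y = 0 by apply: (@lin0 _ _ (fun X => br X Y)) => c' x y; rewrite brDl.
by rewrite -[c *: X]addr0 brDl h0 addr0.
Qed.

Lemma br0l Y : br 0 Y = 0.
Proof. by move: (brZl 0 0 Y); rewrite !scale0r. Qed.
Lemma br0r X : br X 0 = 0.
Proof. by move: (brZr 0 X 0); rewrite !scale0r. Qed.

Lemma st_scale c X : st (c *: X) = c * st X.
Proof. by rewrite -[c *: X]addr0 st_lin st0 addr0. Qed.

Lemma brX0 pu u e b : ParR pu u ->
  br (fldR u e) (fldR (mono 0 set0) b) =
  (- (-1) ^+ ((pu (+) odd (isodd e)) && (odd #|(set0 : {set 'I_n})| (+) odd (isodd b)))) *:
     fldR (dR b u) e.
Proof.
move=> hu; rewrite (br_fldR _ _ _ _ _ _ hu (ParR_mono _ _)) dR_const mulR0r fldR0 sub0r.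
by rewrite mulR1l scaleNr.
Qed.

Lemma brY_eb a z b : br (fldR (mono 0 set0) a) (eb F z b) = (a == z)%:R *: fldR (mono 0 set0) b.
Proof.
rewrite ebE (br_fldR _ _ _ _ _ _ (ParR_mono _ _) (ParR_var _)) dR_const mulR0r fldR0.
by rewrite scaler0 subr0 dR_var mulR1l fldRZ.
Qed.

Lemma core pu u e a : ParR pu u ->
  st (br (fldR u e) (fldR (mono 0 set0) a)) =
  str0 (fun x => br (fldR u e) (br (fldR (mono 0 set0) a) x)).
Proof.
move=> hu; rewrite (brX0 _ _ _ _ hu) st_scale st_fldR /str0.
rewrite (bigD1 a) //= [X in _ + X]big1 ?addr0; last first.
  move=> z nz; apply: big1 => b _.
  by rewrite brY_eb eq_sym (negbTE nz) scale0r br0r coordE ffunE coordR0 mulr0.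
rewrite (bigD1 e) //= [X in _ + X]big1 ?addr0; last first.
  move=> b nb.
  by rewrite brY_eb eqxx scale1r (brX0 _ _ _ _ hu) coordE scaleGE coordR_scale coordR_fldR (negbTE nb) mul0r !mulr0.
rewrite brY_eb eqxx scale1r (brX0 _ _ _ _ hu) coordE scaleGE coordR_scale coordR_fldR eqxx mul1r.
rewrite !coordR_cst supercomm cst_scale.
case: (boolP ((pu (+) odd (isodd e)) (+) odd (isodd a))) => hp.
  by rewrite cst_Par ?mulr0 // -hp; apply: ParR_dR; apply: ParR_dR.
rewrite cards0 /sg.
case: a hp => [j|t]; case: e => [i|r]; case: (pu) => //= _; ring.
Qed.

Lemma S1 X Y : gpiece 0 Y -> st (br X Y) = str0 (fun x => br X (br Y x)).
Proof.
move=> hY.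
apply: (GG_ind (fun X => st (br X Y) = str0 (fun x => br X (br Y x)))).
- rewrite br0l st0; symmetry; apply: str00 => x; exact: br0l.
- move=> c x y hx hy; rewrite brDl st_lin hx hy; symmetry.
  apply: str0_ext => v; exact: brDl.
move=> al S e _.
apply: (GG_ind (fun Y => st (br (fld al S e) Y) = str0 (fun x => br (fld al S e) (br Y x)))).
- rewrite br0r st0; symmetry; apply: str00 => x; by rewrite br0l br0r.
- move=> c x y hx hy; rewrite brDr st_lin hx hy; symmetry.
  by apply: str0_ext => v; rewrite brDl brDr.
move=> be T a hbe.
have := gpiece_deg _ _ _ _ _ hY hbe; move/eqP; rewrite addn_eq0 mdeg_eq0 cards_eq0.
case/andP => /eqP -> /eqP ->.
exact: (core (odd #|S|) (mono al S) e a (ParR_mono al S)).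
Qed.

End Base.

Section Rest.
Variables (F : fieldType) (m n : nat).
Local Notation RR := (RR F m n).
Local Notation GG := (GG F m n).
Local Notation I := ('I_m + 'I_n)%type.
Local Notation st := (st F m n).
Local Notation mono := (mono F m n).
Local Notation fldR := (fldR F m n).
Local Notation fld := (fld F m n).
Local Notation coordR := (coordR F m n).
Local Notation sg := (sg F).
Local Notation va := (va m n).
Local Notation vS := (vS m n).
Implicit Types (al be : 'X_{1..m}) (S T : {set 'I_n}) (X Y : GG) (a b e z w : I).

Lemma st_eb z a : st (eb F z a) = sg (isodd a) * (a == z)%:R.
Proof. by rewrite ebE st_fldR coordR_var. Qed.

Lemma mono_deg1 al S : (mdeg al + #|S| = 1)%N -> exists z, mono al S = varR F z.
Proof.
case: (posnP #|S|) => hS.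
  rewrite hS addn0 => /eqP /mdeg1P [i /eqP ->]; exists (inl i).
  by rewrite varR_mono; move/eqP: hS; rewrite cards_eq0 => /eqP ->.
move=> h; have h1 : #|S| == 1%N by rewrite eqn_leq hS; lia.
have h0 : mdeg al == 0%N by apply/eqP; lia.
move: h1 h0 => /cards1P [r ->]; rewrite mdeg_eq0 => /eqP ->.
by exists (inr r); rewrite varR_mono.
Qed.

Lemma br_eb z a w b : br (eb F z a) (eb F w b) =
  (a == w)%:R *: fldR (varR F z) b -
  (-1) ^+ ((odd #|vS z| (+) odd (isodd a)) && (odd #|vS w| (+) odd (isodd b))) *:
     ((b == z)%:R *: fldR (varR F w) a).
Proof.
rewrite !ebE (br_fldR _ _ _ _ _ _ _ _ _ (ParR_var _ _ _ _) (ParR_var _ _ _ _)).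
by rewrite !dR_var !mulRZr !mulR1r !fldRZ.
Qed.

Lemma st_br_eb z a w b : st (br (eb F z a) (eb F w b)) = 0.
Proof.
rewrite br_eb -scaleNr st_lin !st_scale !st_fldR !coordR_var.
case: (eqVneq a w) => [->|naw]; case: (eqVneq b z) => [->|nbz]; rewrite ?eqxx /=; try ring.
rewrite /sg.
by case: w => [i|r]; case: z => [j|t]; rewrite /= ?cards0 ?cards1 /=; ring.
Qed.

Lemma gpieceZ d c X : gpiece d X -> gpiece d (c *: X).
Proof. by move=> h; rewrite -[c *: X]addr0; apply: gpieceDZ => //; exact: gpiece0. Qed.

Lemma character_st u v : gpiece 1 u -> gpiece 1 v -> st (br u v) = 0.
Proof.
move=> hu hv.
apply: (GG_ind _ _ _ (fun u => st (br u v) = 0) u).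
- by rewrite br0l st0.
- by move=> c x y hx hy; rewrite brDl st_lin hx hy mulr0 addr0.
move=> al S a hal.
have [z hz] := mono_deg1 _ _ (gpiece_deg _ _ _ _ _ _ _ _ hu hal).
apply: (GG_ind _ _ _ (fun v => st (br (fld al S a) v) = 0) v).
- by rewrite br0r st0.
- by move=> c x y hx hy; rewrite brDr st_lin hx hy mulr0 addr0.
move=> be T b hbe.
have [w hw] := mono_deg1 _ _ (gpiece_deg _ _ _ _ _ _ _ _ hv hbe).
by rewrite /fld hz hw -!ebE st_br_eb.
Qed.

Lemma gamma0 (gamma : GG -> F) : linear_g0 gamma -> gamma 0 = 0.
Proof.
move=> h; have := h 1 0 0 (gpiece0 _ _ _ _) (gpiece0 _ _ _ _).
rewrite scale1r addr0 mul1r => /(congr1 (fun x => x - gamma 0)).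
by rewrite subrr addrK => <-.
Qed.

Lemma gamma_st (gamma : GG -> F) : linear_g0 gamma ->
  (forall z a, gamma (eb F z a) = st (eb F z a)) ->
  forall u, gpiece 1 u -> gamma u = st u.
Proof.
move=> hl he u hu.
suff : gpiece 1 u /\ gamma u = st u by case.
apply: (GG_ind _ _ _ (fun u => gpiece 1 u /\ gamma u = st u) u).
- by split; [exact: gpiece0 | rewrite gamma0 // st0].
- move=> c x y [hx ex] [hy ey]; split; first exact: gpieceDZ.
  by rewrite hl // st_lin ex ey.
move=> al S a hal.
have hd := gpiece_deg _ _ _ _ _ _ _ _ hu hal.
have [z hz] := mono_deg1 _ _ hd.
split; first exact: gpiece_fld.
by rewrite /fld hz -ebE he.
Qed.

Lemma gpiece_dR_mono al S a e : (mdeg al + #|S| = 2)%N -> gpiece 1 (fldR (dR a (mono al S)) e).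
Proof.
move=> h; case: a => [j|t] /=.
  rewrite dx_mono fldRZ; case: (posnP (al j)) => hj.
    by rewrite hj scale0r; exact: gpiece0.
  apply: gpieceZ; apply: gpiece_fld; rewrite mdeg_sub; last by apply: lemU.
  have : (al j <= mdeg al)%N by rewrite mdegE (bigD1 j) //= leq_addr.
  by rewrite mdeg1; lia.
rewrite dy_mono; case: ifP => tS; last by rewrite fldR0; exact: gpiece0.
have hc : #|S| = #|S :\ t|.+1 by rewrite (cardsD1 t S) tS.
rewrite fldRZ; apply: gpieceZ; apply: gpiece_fld; rewrite hc in h; lia.
Qed.

Lemma gpiece_br X Y : gpiece 2 X -> gpiece 0 Y -> gpiece 1 (br X Y).
Proof.
move=> hX hY.
apply: (GG_ind _ _ _ (fun X => gpiece 1 (br X Y)) X).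
- by rewrite br0l; exact: gpiece0.
- by move=> c x y hx hy; rewrite brDl; exact: gpieceDZ.
move=> al S e hal.
have hd := gpiece_deg _ _ _ _ _ _ _ _ hX hal.
apply: (GG_ind _ _ _ (fun Y => gpiece 1 (br (fld al S e) Y)) Y).
- by rewrite br0r; exact: gpiece0.
- by move=> c x y hx hy; rewrite brDr; exact: gpieceDZ.
move=> be T a hbe.
have := gpiece_deg _ _ _ _ _ _ _ _ hY hbe; move/eqP; rewrite addn_eq0 mdeg_eq0 cards_eq0.
case/andP => /eqP -> /eqP ->.
rewrite /fld (brX0 _ _ _ _ _ _ _ (ParR_mono _ _ _ _ _)).
by apply: gpieceZ; apply: gpiece_dR_mono.
Qed.

Lemma values_SI2 (gamma : GG -> F) : linear_g0 gamma ->
  (forall z a, gamma (eb F z a) = st (eb F z a)) -> SI2 gamma.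
Proof.
move=> hl he X Y hX hY; rewrite (gamma_st _ hl he); last exact: gpiece_br.
exact: S1.
Qed.

Definition values (gamma : GG -> F) : Prop :=
  (forall i j : 'I_m, gamma (eb F (inl i) (inl j)) = (i == j)%:R) /\
  (forall (r : 'I_n) (j : 'I_m), gamma (eb F (inr r) (inl j)) = 0) /\
  (forall (i : 'I_m) (t : 'I_n), gamma (eb F (inl i) (inr t)) = 0) /\
  (forall r t : 'I_n, gamma (eb F (inr r) (inr t)) = - (r == t)%:R).

Lemma values_eb (gamma : GG -> F) : values gamma <->
  (forall z a, gamma (eb F z a) = st (eb F z a)).
Proof.
split.
  case=> [h1 [h2 [h3 h4]]] z a; rewrite st_eb /sg.
  case: z => [i|r]; case: a => [j|t] /=.
  - by rewrite h1 eq_inl eq_sym expr0 mul1r.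
  - by rewrite h3 mulr0.
  - by rewrite h2 mulr0.
  - by rewrite h4 eq_inr eq_sym expr1 mulN1r.
move=> h; split; [|split; [|split]] => ? ?; rewrite h st_eb /sg /=.
- by rewrite eq_inl eq_sym expr0 mul1r.
- by rewrite mulr0.
- by rewrite mulr0.
- by rewrite eq_inr eq_sym expr1 mulN1r.
Qed.

Variables (charF : [pchar F] =i pred0) (hm : (0 < m)%N).

Lemma SI2_eb (gamma : GG -> F) : linear_g0 gamma -> SI2 gamma ->
  forall z a, gamma (eb F z a) = st (eb F z a).
Proof.
move=> hl hs z a; pose i0 : 'I_m := Ordinal hm.
have hk : - (((U_(i0) + va z)%MM i0)%:R : F) != 0.
  by rewrite oppr_eq0 natF_neq0 // mnmDE mnm1E eqxx.
have E : br (fld (U_(i0) + va z) (vS z) a) (fld 0 set0 (inl i0)) =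
    (- (((U_(i0) + va z)%MM i0)%:R : F)) *: eb F z a.
  rewrite /fld (brX0 _ _ _ _ _ _ _ (ParR_mono _ _ _ _ _)) cards0 /= andbF expr0.
  by rewrite dx_mono UBU -varR_mono fldRZ scalerA mulN1r ebE.
have gX : gpiece 2 (fld (U_(i0) + va z) (vS z) a).
  by apply: gpiece_fld; case: z {E hk} => [i|r] /=; rewrite mdegD !mdeg1 ?mdeg0 ?cards0 ?cards1.
have gY : gpiece 0 (fld 0 set0 (inl i0)) by apply: gpiece_fld; rewrite mdeg0 cards0.
have g1 : gpiece 1 (eb F z a).
  by rewrite ebE varR_mono; apply: gpiece_fld; case: z {E hk gX} => [i|r] /=; rewrite ?mdeg1 ?mdeg0 ?cards0 ?cards1.
have := hs _ _ gX gY; rewrite -S1 // E.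
have L := hl (- (((U_(i0) + va z)%MM i0)%:R : F)) (eb F z a) 0 g1 (gpiece0 F m n 1).
rewrite addr0 (gamma0 _ hl) addr0 in L.
rewrite L st_scale.
exact: (mulfI hk).
Qed.

End Rest.

Theorem mainTheorem14 (F : closedFieldType) (m n : nat)
  (charF : [pchar F] =i pred0) (hm : (0 < m)%N) (hn : (0 < n)%N) :
  (* (a) W(m,n) is generated by g_{-1}, g_0, g_1 *)
  (forall X : GG F m n, gen X) /\
  (* (b) characterisation of (SI-2) for linear gamma on g_0 *)
  (forall gamma : GG F m n -> F, linear_g0 gamma ->
     (SI2 gamma <->
      ((forall i j : 'I_m, gamma (eb F (inl i) (inl j)) = (i == j)%:R) /\
       (forall (r : 'I_n) (j : 'I_m), gamma (eb F (inr r) (inl j)) = 0) /\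
       (forall (i : 'I_m) (t : 'I_n), gamma (eb F (inl i) (inr t)) = 0) /\
       (forall r t : 'I_n, gamma (eb F (inr r) (inr t)) = - (r == t)%:R)))) /\
  (* consequences: a semi-infinite character exists, *)
  (exists gamma : GG F m n -> F, semi_infinite gamma) /\
  (* it is unique (on g_0), *)
  (forall gamma1 gamma2 : GG F m n -> F,
     semi_infinite gamma1 -> semi_infinite gamma2 ->
     forall u : GG F m n, gpiece 1 u -> gamma1 u = gamma2 u) /\
  (* and its restriction to h is E = sum eps_i - sum delta_s *)
  (forall gamma : GG F m n -> F, semi_infinite gamma ->
     (forall i : 'I_m, gamma (eb F (inl i) (inl i)) = 1) /\
     (forall s : 'I_n, gamma (eb F (inr s) (inr s)) = -1)).
Proof.
have hb : forall gamma : GG F m n -> F, linear_g0 gamma -> SI2 gamma -> values F m n gamma.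
  by move=> gamma hl hs; apply/values_eb; exact: SI2_eb.
split; first exact: gen_all.
split.
  move=> gamma hl; split; first exact: hb.
  by move=> hv; apply: values_SI2 => //; apply/values_eb.
split.
  exists (st F m n); split; [split|split].
  - by move=> c u v _ _; exact: st_lin.
  - exact: character_st.
  - exact: gen_all.
  - by move=> X Y _ hY; exact: S1.
split.
  move=> g1 g2 [[h1 _] [_ s1]] [[h2 _] [_ s2]] u hu.
  rewrite (gamma_st _ _ _ _ h1 (SI2_eb _ _ _ charF hm _ h1 s1)) //.
  by rewrite (gamma_st _ _ _ _ h2 (SI2_eb _ _ _ charF hm _ h2 s2)).
move=> g [[hl _] [_ hs]].
have [h1 [_ [_ h4]]] := hb g hl hs.
by split => [i|s]; [rewrite h1 eqxx | rewrite h4 eqxx].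
Qed.
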